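(* Define $\beta=(\beta_n)_{n\ge0}$ by $\beta_n=1$ for $0\le n\le 3!=6$, and for each integer $k\ge3$: $\beta_n=\frac1{k!}$ for $k!<n\le(k+1)!-2$ and for $n=(k+1)!$, and $\beta_n=\frac1{(k+1)!}$ for $n=(k+1)!-1$. Then for every $a\in(0,1)$, the map $T_a$ does not induce a bounded composition operator on $H^2(\beta)$.
   Context: $H^2(\beta)$ is the Hilbert space of analytic functions $f(z)=\sum_{n\ge0}a_nz^n$ on the unit disk $\mathbb D$ with $\|f\|^2=\sum_{n\ge0}|a_n|^2\beta_n<\infty$. $T_a(z)=\frac{a+z}{1+\bar a z}$ and $C_{T_a}f=f\circ T_a$. *)

(* Defs.v *)
From Stdlib Require Import Reals Arith Factorial.
From Coquelicot Require Import Coquelicot.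
Open Scope R_scope.

Definition beta_spec (beta : nat -> R) : Prop :=
  (forall n : nat, (n <= 6)%nat -> beta n = 1) /\
  (forall k n : nat, (3 <= k)%nat ->
      ((fact k < n)%nat /\ (n <= fact (k + 1) - 2)%nat \/ n = fact (k + 1)) ->
      beta n = / INR (fact k)) /\
  (forall k : nat, (3 <= k)%nat ->
      beta (fact (k + 1) - 1)%nat = / INR (fact (k + 1))).

(* f = sum a_n z^n belongs to H^2(beta) *)
Definition in_H2 (beta : nat -> R) (a : nat -> C) : Prop :=
  ex_series (fun n => (Cmod (a n))^2 * beta n).

Definition H2norm2 (beta : nat -> R) (a : nat -> C) : R :=
  Series (fun n => (Cmod (a n))^2 * beta n).

Definition Tmob (a : C) (z : C) : C :=
  Cdiv (Cplus a z) (Cplus (RtoC 1) (Cmult (Cconj a) z)).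

Definition bounded_comp_op (beta : nat -> R) (a : C) : Prop :=
  exists M : R, forall f : nat -> C, in_H2 beta f ->
    exists g : nat -> C, in_H2 beta g /\
      H2norm2 beta g <= M * H2norm2 beta f /\
      forall z : C, Cmod z < 1 ->
        exists l : C, is_pseries f (Tmob a z) l /\ is_pseries g z l.

(* Main.v *)
Require Import Defs.
From Stdlib Require Import Reals Arith Factorial.
From Coquelicot Require Import Coquelicot.
From Stdlib Require Import Lia Lra Psatz.
Open Scope R_scope.

Lemma sumR_S (u : nat -> R) n : sum_n u (S n) = sum_n u n + u (S n).
Proof. exact (sum_Sn u n). Qed.
Lemma sumR_O (u : nat -> R) : sum_n u 0 = u 0%nat.
Proof. exact (sum_O u). Qed.
Lemma sumR_le (u v : nat -> R) n : (forall j, u j <= v j) -> sum_n u n <= sum_n v n.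
Proof. intros H; induction n. rewrite !sumR_O; auto. rewrite !sumR_S. specialize (H (S n)). lra. Qed.
Lemma sumR_ext (u v : nat -> R) n : (forall j, u j = v j) -> sum_n u n = sum_n v n.
Proof. intros H; induction n; [rewrite !sumR_O; auto|]. rewrite !sumR_S, IHn, H. reflexivity. Qed.


Lemma sumR_plus (u v : nat -> R) n : sum_n (fun j => u j + v j) n = sum_n u n + sum_n v n.
Proof. induction n; [rewrite !sumR_O; reflexivity|]. rewrite !sumR_S, IHn. lra. Qed.
Lemma sumR_scal (c : R) (u : nat -> R) n : sum_n (fun j => c * u j) n = c * sum_n u n.
Proof. induction n. rewrite !sumR_O; auto. rewrite !sumR_S, IHn. rewrite Rmult_plus_distr_l. reflexivity. Qed.

Lemma fact_cover d : exists k, (3<=k)%nat /\ (fact k < 7 + d <= fact (k+1))%nat.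
Proof.
induction d.
- exists 3%nat. simpl. lia.
- destruct IHd as [k [H1 [H2 H3]]].
  destruct (Nat.eq_dec (7 + d) (fact (k+1))) as [E|E].
  + exists (k+1)%nat. split; [lia|]. split; [lia|].
    replace (k+1+1)%nat with (S (k+1)) by lia.
    change (fact (S (k+1))) with (S (k+1) * fact (k+1))%nat. nia.
  + exists k. lia.
Qed.

Lemma INR_fact_pos n : 0 < INR (fact n).
Proof. apply lt_0_INR, lt_O_fact. Qed.

Lemma beta_cases beta : beta_spec beta -> forall j,
  ((j <= 6)%nat /\ beta j = 1) \/
  exists k, (3 <= k /\ fact k < j <= fact (k+1))%nat /\
   ((j = fact (k+1) - 1 /\ beta j = / INR (fact (k+1)))%nat \/
    (j <> fact (k+1) - 1 /\ beta j = / INR (fact k))%nat).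
Proof.
intros [B1 [B2 B3]] j.
destruct (le_lt_dec j 6) as [Hm|Hm].
- left. split; auto.
- right. destruct (fact_cover (j - 7)) as [k [H1 [H2 H3]]].
  replace (7 + (j-7))%nat with j in * by lia.
  exists k. split; [lia|].
  destruct (Nat.eq_dec j (fact (k+1) - 1)) as [E|E].
  + left. split; auto. subst j. apply B3. lia.
  + right. split; auto. apply (B2 k j); lia.
Qed.

Lemma beta_pos beta : beta_spec beta -> forall m, 0 < beta m.
Proof.
intros hb m. destruct (beta_cases beta hb m) as [[_ E]|[k [_ [[_ E]|[_ E]]]]]; rewrite E;
 try lra; apply Rinv_0_lt_compat, INR_fact_pos.
Qed.

Lemma W2 beta : beta_spec beta -> forall j, / beta j <= INR j + 1.
Proof.
intros hb j. pose proof (pos_INR j).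
destruct (beta_cases beta hb j) as [[_ E]|[k [Hk [[Ej E]|[_ E]]]]]; rewrite E.
- rewrite Rinv_1. lra.
- rewrite Rinv_inv. replace (INR j + 1) with (INR (S j)) by (rewrite S_INR; ring).
  apply le_INR. pose proof (lt_O_fact (k+1)). lia.
- rewrite Rinv_inv. replace (INR j + 1) with (INR (S j)) by (rewrite S_INR; ring).
  apply le_INR. lia.
Qed.

Lemma W1 beta k : beta_spec beta -> (3 <= k)%nat -> forall j, (j <= fact (k+1))%nat ->
  j <> (fact (k+1) - 1)%nat -> / beta j <= INR (fact k).
Proof.
intros hb Hk j Hj Hne.
destruct (beta_cases beta hb j) as [[_ E]|[k' [Hk' [[Ej E]|[Ne E]]]]]; rewrite E.
- rewrite Rinv_1. pose proof (lt_O_fact k). apply (le_INR 1). lia.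
- rewrite Rinv_inv. apply le_INR.
  assert (k' < k)%nat.
  { destruct (le_lt_dec k k') as [h|h]; auto.
    destruct (Nat.eq_dec k k'). subst. lia.
    pose proof (fact_le (k+1) k' ltac:(lia)). lia. }
  apply fact_le. lia.
- rewrite Rinv_inv. apply le_INR.
  assert (k' <= k)%nat.
  { destruct (le_lt_dec k' k) as [h|h]; auto.
    pose proof (fact_le (k+1) k' ltac:(lia)). lia. }
  apply fact_le. lia.
Qed.

Lemma W3 beta k : beta_spec beta -> (3 <= k)%nat -> forall j,
  (fact (k+1) < j <= 2 * fact (k+1))%nat -> beta j = / INR (fact (k+1)).
Proof.
intros [B1 [B2 B3]] Hk j Hj. apply (B2 (k+1)%nat j). lia. left. split. lia.
replace (k+1+1)%nat with (S (S k)) by lia.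
replace (k+1)%nat with (S k) in * by lia.
change (fact (S (S k))) with (S (S k) * fact (S k))%nat.
pose proof (lt_O_fact (S k)). nia.
Qed.

Lemma geom_shift (y : R) (m : nat) : y <> 1 -> forall n,
  sum_n (fun j => if (m <=? j)%nat then y^(j-m) else 0) n = (1 - y^(n+1-m)) / (1 - y).
Proof.
intros Hy n. induction n.
- rewrite sumR_O. destruct m; simpl. field. intro; apply Hy; lra.
  replace (1 - S m)%nat with 0%nat by lia. simpl. field. intro; apply Hy; lra.
- rewrite sumR_S, IHn. destruct (m <=? S n)%nat eqn:E.
  + apply Nat.leb_le in E. replace (S n + 1 - m)%nat with (S (n + 1 - m)) by lia.
    replace (S n - m)%nat with (n + 1 - m)%nat by lia. simpl. field. intro; apply Hy; lra.
  + apply Nat.leb_gt in E. replace (S n + 1 - m)%nat with 0%nat by lia.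
    replace (n + 1 - m)%nat with 0%nat by lia. simpl. field. intro; apply Hy; lra.
Qed.

Lemma geom_shift_le (y : R) (m : nat) : 0 <= y < 1 -> forall n,
  sum_n (fun j => if (m <=? j)%nat then y^(j-m) else 0) n <= / (1 - y).
Proof.
intros Hy n. rewrite geom_shift by lra. unfold Rdiv.
assert (0 <= y^(n+1-m)) by (apply pow_le; lra).
assert (0 < /(1-y)) by (apply Rinv_0_lt_compat; lra). nra.
Qed.

Lemma bernoulli h i : 0 <= h -> 1 + INR i * h <= (1 + h)^i.
Proof.
intros Hh. induction i. simpl. lra. rewrite S_INR. simpl.
assert (0 <= INR i * h) by (apply Rmult_le_pos; [apply pos_INR|lra]). nra.
Qed.

Lemma E_bound beta k (x : R) : beta_spec beta -> (3 <= k)%nat ->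
  0 < x < 1 -> x * (1 + / INR (fact (k+1))) < 1 ->
  forall n, sum_n (fun j => x^j / beta j) n <=
    INR (fact k) / (1 - x) + INR (fact (k+1)) * x^(fact (k+1) - 1) / (1 - x * (1 + / INR (fact (k+1)))).
Proof.
intros hb Hk Hx Hz n.
set (N := fact (k+1)). set (z := x * (1 + / INR N)).
assert (HN : (1 <= N)%nat) by apply lt_O_fact.
assert (HNr : 1 <= INR N) by (apply (le_INR 1); lia).
assert (Hz0 : 0 <= z). { unfold z. assert (0 < / INR N) by (apply Rinv_0_lt_compat; lra). nra. }
eapply Rle_trans. apply sumR_le with
  (v := fun j => INR (fact k) * x^j + (INR N * x^(N-1)) * (if (N-1 <=? j)%nat then z^(j - (N-1)) else 0)).
- intros j. pose proof (beta_pos beta hb j) as Bj.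
  assert (Hxj : 0 <= x^j) by (apply pow_le; lra).
  assert (HxN : 0 <= x^(N-1)) by (apply pow_le; lra).
  unfold Rdiv.
  destruct (le_lt_dec j N) as [h1|h1]; [destruct (Nat.eq_dec j (N-1)) as [h2|h2]|].
  +
    subst j. rewrite Nat.leb_refl, Nat.sub_diag. simpl pow.
    pose proof (W2 beta hb (N-1)).
    replace (INR (N-1) + 1) with (INR N) in H by (rewrite minus_INR by lia; simpl; ring).
    assert (0 <= INR (fact k) * x^(N-1)) by (apply Rmult_le_pos; [apply pos_INR|auto]). nra.
  + pose proof (W1 beta k hb Hk j h1 h2).
    assert (0 <= (if (N - 1 <=? j)%nat then z ^ (j - (N - 1)) else 0)).
    { destruct (N - 1 <=? j)%nat. apply pow_le; auto. lra. }
    assert (0 <= INR N * x ^ (N - 1) * (if (N - 1 <=? j)%nat then z ^ (j - (N - 1)) else 0)).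
    { apply Rmult_le_pos; auto. apply Rmult_le_pos; lra. }
    rewrite Rmult_comm. nra.
  + assert (E: (N - 1 <=? j)%nat = true) by (apply Nat.leb_le; lia). rewrite E.
    pose proof (W2 beta hb j).
    assert (0 <= INR (fact k) * x^j) by (apply Rmult_le_pos; [apply pos_INR|auto]).
    set (i := (j - (N-1))%nat).
    assert (Hj : j = (N - 1 + i)%nat) by (unfold i; lia).
    assert ((INR j + 1) * x^j <= INR N * x^(N-1) * z^i).
    { unfold z. rewrite Rpow_mult_distr. rewrite Hj at 2. rewrite pow_add.
      pose proof (bernoulli (/ INR N) i ltac:(apply Rlt_le, Rinv_0_lt_compat; lra)).
      assert (INR j + 1 = INR N + INR i).
      { rewrite Hj, plus_INR, minus_INR by lia. simpl. ring. }
      assert (0 <= x^i) by (apply pow_le; lra).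
      assert (INR N * (1 + INR i * / INR N) = INR N + INR i) by (field; lra).
      assert (INR j + 1 <= INR N * (1 + / INR N)^i) by nra.
      assert (0 <= x^(N-1) * x^i) by (apply Rmult_le_pos; auto).
      nra. }
    assert (/ beta j * x^j <= (INR j + 1) * x^j) by (apply Rmult_le_compat_r; auto).
    lra.
- rewrite sumR_plus, sumR_scal, sumR_scal.
  assert (G1 : sum_n (fun j => x^j) n <= / (1 - x)).
  { pose proof (geom_shift_le x 0 ltac:(split; lra) n) as G.
    eapply Rle_trans; [|exact G]. apply sumR_le. intros j. simpl. rewrite Nat.sub_0_r. lra. }
  assert (Hzz : 0 <= z < 1) by (split; [exact Hz0|unfold z, N; exact Hz]). pose proof (geom_shift_le z (N-1) Hzz n) as G2.
  assert (0 <= INR N * x^(N-1)) by (apply Rmult_le_pos; [lra|apply pow_le; lra]).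
  assert (0 <= INR (fact k)) by apply pos_INR.
  unfold Rdiv. apply Rplus_le_compat; apply Rmult_le_compat_l; auto.
Qed.
Lemma sum_le_Series (u : nat -> R) : (forall n, 0 <= u n) -> ex_series u -> forall n, sum_n u n <= Series u.
Proof.
intros H Hu n. apply is_lim_seq_incr_compare.
- apply Series_correct, Hu.
- intros m. rewrite sumR_S. specialize (H (S m)). lra.
Qed.

Lemma norm_sum_n {K : AbsRing} {V : NormedModule K} (u : nat -> V) n :
  norm (sum_n u n) <= sum_n (fun j => norm (u j)) n.
Proof.
induction n. rewrite sum_O, sumR_O. lra.
rewrite sum_Sn, sumR_S. eapply Rle_trans. apply norm_triangle. lra.
Qed.

Lemma Cmod_pow_n (x : C) n : Cmod (pow_n x n) = Cmod x ^ n.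
Proof.
induction n; simpl. apply Cmod_1.
change (mult x (pow_n x n)) with (Cmult x (pow_n x n)). rewrite Cmod_mult, IHn. reflexivity.
Qed.

Lemma amgm c y b t : 0 < b -> 0 < t -> c*y <= (t*(c^2*b) + y^2/b/t)/2.
Proof.
intros Hb Ht.
assert (H: (t*(c^2*b) + y^2/b/t)/2 - c*y = (t*c*b - y)^2/(2*b*t)) by (field; lra).
assert (0 <= (t*c*b-y)^2/(2*b*t)).
{ apply Rdiv_le_0_compat. apply pow2_ge_0. nra. }
lra.
Qed.

Lemma CS_bound (beta : nat -> R) (g : nat -> C) (r l E t : R) :
  (forall j, 0 < beta j) -> ex_series (fun n => (Cmod (g n))^2 * beta n) ->
  0 <= r -> 0 < t ->
  (forall n, sum_n (fun j => r^(2*j) / beta j) n <= E) ->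
  is_pseries g (RtoC r) (RtoC l) ->
  Rabs l <= (t * Series (fun n => (Cmod (g n))^2 * beta n) + E / t) / 2.
Proof.
intros Bpos Hg Hr Ht HE Hl.
set (A := Series (fun n => (Cmod (g n))^2 * beta n)).
set (G := sum_n (fun j => scal (pow_n (RtoC r) j) (g j))).
assert (HG : forall n, Cmod (G n) <= (t * A + E / t) / 2).
{ intros n. eapply Rle_trans. apply (norm_sum_n (K := C_AbsRing) (V := C_NormedModule)).
  change norm with Cmod.
  eapply Rle_trans.
  apply sumR_le with (v := fun j => (t * ((Cmod (g j))^2 * beta j) + r^(2*j)/beta j / t)/2).
  - intros j. change (scal (pow_n (RtoC r) j) (g j)) with (Cmult (pow_n (RtoC r) j) (g j)).
    rewrite Cmod_mult, Cmod_pow_n, Cmod_R, Rabs_pos_eq by lra.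
    rewrite Nat.mul_comm, pow_mult, Rmult_comm. apply amgm; auto.
  - rewrite (sumR_ext (fun j => (t * ((Cmod (g j))^2 * beta j) + r^(2*j)/beta j / t)/2)
      (fun j => (/2 * t) * ((Cmod (g j))^2 * beta j) + (/2 * /t) * (r^(2*j)/beta j))).
    2: { intros j. cbv beta. unfold Rdiv. ring. }
    rewrite sumR_plus, !sumR_scal.
    assert (sum_n (fun j => (Cmod (g j))^2 * beta j) n <= A).
    { apply sum_le_Series; auto. intros m. specialize (Bpos m).
      apply Rmult_le_pos; [apply pow2_ge_0|lra]. }
    specialize (HE n).
    assert (0 < /t) by (apply Rinv_0_lt_compat; lra).
    assert (/2*t*sum_n (fun j => (Cmod (g j))^2 * beta j) n <= /2*t*A) by (apply Rmult_le_compat_l; lra).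
    assert (/2*/t*sum_n (fun j => r^(2*j)/beta j) n <= /2*/t*E) by (apply Rmult_le_compat_l; lra).
    unfold Rdiv. lra. }
assert (Hlim : is_lim_seq (fun n => Cmod (G n)) (Cmod (RtoC l))).
{ unfold is_lim_seq. eapply filterlim_comp. exact Hl. apply (filterlim_norm (K:=C_AbsRing) (V:=C_NormedModule)). }
pose proof (is_lim_seq_le _ _ _ _ HG Hlim (is_lim_seq_const _)) as H.
simpl in H. rewrite Cmod_R in H. exact H.
Qed.


Lemma is_series_fin {K : AbsRing} {V : NormedModule K} (u : nat -> V) n :
  (forall m, (n < m)%nat -> u m = zero) -> is_series u (sum_n u n).
Proof.
intros H.
assert (H1 : forall d, sum_n u (n + d) = sum_n u n).
{ induction d.
  - rewrite Nat.add_0_r. reflexivity.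
  - rewrite Nat.add_succ_r, sum_Sn, IHd, (H (S (n+d))) by lia. apply plus_zero_r. }
unfold is_series.
apply filterlim_ext_loc with (fun _ => sum_n u n).
- exists n. intros m Hm. replace m with (n + (m - n))%nat by lia. now rewrite H1.
- apply filterlim_const.
Qed.

Lemma pow_n_RtoC (y : R) j : pow_n (RtoC y) j = RtoC (y^j).
Proof.
induction j. reflexivity. simpl. rewrite IHj. change (mult (RtoC y) (RtoC (y^j))) with (Cmult (RtoC y) (RtoC (y^j))).
rewrite RtoC_mult. reflexivity.
Qed.

Lemma sum_n_RtoC (c : nat -> R) n : sum_n (fun j => RtoC (c j)) n = RtoC (sum_n c n).
Proof.
induction n. rewrite !sum_O. reflexivity.
rewrite !sum_Sn, IHn. change (plus (RtoC (sum_n c n)) (RtoC (c (S n)))) with (Cplus (RtoC (sum_n c n)) (RtoC (c (S n)))).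
rewrite RtoC_plus. reflexivity.
Qed.

Lemma TmobR (a r : R) : 1 + a * r <> 0 -> Tmob (RtoC a) (RtoC r) = RtoC ((a + r) / (1 + a * r)).
Proof.
intros H. unfold Tmob, Cdiv, Cplus, Cmult, Cinv, Cconj, RtoC; simpl.
f_equal; field; intro E; apply H; nra.
Qed.

Lemma exp_pow y n : exp y ^ n = exp (INR n * y).
Proof.
induction n. simpl. rewrite Rmult_0_l, exp_0. reflexivity.
rewrite S_INR. simpl. rewrite IHn, <- exp_plus. f_equal. ring.
Qed.

Lemma one_minus_exp v : 0 < v <= 1 -> v / 2 <= 1 - exp (- v).
Proof.
intros Hv. rewrite exp_Ropp. pose proof (exp_ineq1_le v). pose proof (exp_pos v).
assert (/ exp v <= / (1 + v)) by (apply Rinv_le_contravar; lra).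
assert (1 - / (1+v) = v / (1+v)) by (field; lra).
assert (v / 2 <= v / (1 + v)). { unfold Rdiv. apply Rmult_le_compat_l. lra. apply Rinv_le_contravar; lra. }
lra.
Qed.

Lemma ln_le_sub y : 0 < y -> ln y <= y - 1.
Proof.
intros Hy. rewrite <- (ln_exp (y - 1)). apply ln_le; auto.
pose proof (exp_ineq1_le (y-1)). lra.
Qed.

Lemma le_fact n : (n <= fact n)%nat.
Proof.
induction n. simpl; lia.
change (fact (S n)) with (S n * fact n)%nat. pose proof (lt_O_fact n). nia.
Qed.

Lemma pow_le_dec (y : R) m n : 0 <= y <= 1 -> (m <= n)%nat -> y ^ n <= y ^ m.
Proof.
intros Hy Hmn. replace n with (m + (n - m))%nat by lia. rewrite pow_add.
assert (y ^ (n - m) <= 1) by (rewrite <- (pow1 (n-m)); apply pow_incr; lra).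
assert (0 <= y ^ m) by (apply pow_le; lra).
assert (0 <= y ^ (n-m)) by (apply pow_le; lra). nra.
Qed.

Lemma sumR_nonneg (u : nat -> R) n : (forall j, 0 <= u j) -> 0 <= sum_n u n.
Proof. intros H; induction n. rewrite sumR_O; auto. rewrite sumR_S. specialize (H (S n)). lra. Qed.

Theorem mainTheorem14 (beta : nat -> R) (hbeta : beta_spec beta)
  (a : R) (ha : 0 < a < 1) :
  ~ bounded_comp_op beta (RtoC a).
Proof.
intros [M HM].
pose proof (beta_pos beta hbeta) as Bpos.
set (M' := Rabs M + 1).
assert (HM' : 0 < M') by (pose proof (Rabs_pos M); unfold M'; lra).
assert (H2a : 0 < 2 / a) by (apply Rdiv_lt_0_compat; lra).
destruct (INR_unbounded (2/a)) as [q Hq].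
assert (Hq0 : (1 <= q)%nat). { destruct q; [simpl in Hq; lra|lia]. }
assert (Hqr : 1 <= INR q) by (apply (le_INR 1); lia).
set (B := Rmax (2/a) (exp (4 * ln (14 * INR q * M') / a))).
destruct (INR_unbounded B) as [K0 HK0].
set (k := (K0 + 8 + 2*q)%nat).
assert (Hk8 : (8 <= k)%nat) by (unfold k; lia).
assert (HkB : INR k > B).
{ assert (INR K0 <= INR k) by (apply le_INR; unfold k; lia). lra. }
assert (Hk2a : INR k > 2 / a) by (pose proof (Rmax_l (2/a) (exp (4 * ln (14 * INR q * M') / a))); fold B in H; lra).
assert (HkE : INR k > exp (4 * ln (14 * INR q * M') / a)) by (pose proof (Rmax_r (2/a) (exp (4 * ln (14 * INR q * M') / a))); fold B in H; lra).
assert (Hk8r : 8 <= INR k) by (pose proof (le_INR 8 k ltac:(lia)) as H; simpl in H; lra).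
assert (Hkq : 2 * INR q <= INR k).
{ replace (2 * INR q) with (INR (2*q)) by (rewrite mult_INR; reflexivity). apply le_INR. unfold k; lia. }
set (N := fact (k+1)). set (Nr := INR N). set (kf := INR (fact k)). set (kr := INR k + 1).
assert (HNk : Nr = kr * kf).
{ unfold Nr, N, kr, kf. replace (k+1)%nat with (S k) by lia. simpl fact. rewrite plus_INR, mult_INR. ring. }
assert (Hkf : INR k <= kf) by (apply le_INR, le_fact).
assert (HNdef : N = fact (k+1)) by reflexivity.
assert (HNpos1 : (1 <= N)%nat) by (rewrite HNdef; apply lt_O_fact).
clearbody N.
clear HK0 HkB.
assert (Hkr9 : 9 <= kr) by (unfold kr; lra).
set (L := ln kr).
assert (HL2 : 2 <= L).
{ unfold L. rewrite <- (ln_exp 2). apply ln_le. apply exp_pos.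
  replace 2 with (1 + 1) by ring. rewrite exp_plus. pose proof exp_le_3. pose proof (exp_pos 1). nra. }
assert (HLk : L <= INR k) by (unfold L; pose proof (ln_le_sub kr ltac:(lra)); unfold kr in *; lra).
assert (HNr : kr * INR k <= Nr) by (rewrite HNk; apply Rmult_le_compat_l; lra).
assert (HNr2 : 2 * INR q <= Nr) by nra.
assert (HNpos : 0 < Nr) by nra.
set (u := L / Nr).
assert (Hu : 0 < u <= 1).
{ unfold u. split. apply Rdiv_lt_0_compat; lra. apply Rmult_le_reg_r with Nr; auto. unfold Rdiv. rewrite Rmult_assoc, Rinv_l by lra. nra. }
set (s := L / (2 * Nr)).
assert (Hsu : 2 * s = u) by (unfold s, u; field; lra).
set (r := exp (- s)). set (x := exp (- u)).
assert (Hr2 : r ^ 2 = x) by (unfold r, x; rewrite exp_pow; f_equal; simpl; lra).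
assert (Hs : 0 < s) by lra.
assert (Hr : 0 < r < 1).
{ split. apply exp_pos. unfold r. rewrite <- exp_0. apply exp_increasing. lra. }
assert (Hx : 0 < x < 1).
{ split. apply exp_pos. unfold x. rewrite <- exp_0. apply exp_increasing. lra. }
assert (Hrs : 1 - s <= r) by (unfold r; pose proof (exp_ineq1_le (-s)); lra).
set (rho := (a + r) / (1 + a * r)).
assert (Hrho1 : rho * (1 + a * r) = a + r) by (unfold rho; field; nra).
assert (Hrho : 0 < rho < 1).
{ unfold rho. split. apply Rdiv_lt_0_compat; nra. apply Rmult_lt_reg_r with (1 + a*r). nra.
  unfold Rdiv. rewrite Rmult_assoc, Rinv_l by nra. nra. }
assert (Hrho2 : 1 - (1 - a) * s <= rho).
{ assert (E : (1 - rho) * (1 + a*r) = (1-a)*(1-r)) by (rewrite Rmult_minus_distr_r, Hrho1; ring).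
  assert (0 <= (1-rho)*(a*r)) by (apply Rmult_le_pos; nra).
  assert (0 <= (1-a) * (s - (1 - r))) by (apply Rmult_le_pos; lra).
  lra. }
set (W := (N / q)%nat).
assert (HW1 : (q * W <= N)%nat) by apply Nat.Div0.mul_div_le.
assert (HW2 : (N < q * S W)%nat) by (apply Nat.mul_succ_div_gt; lia).
assert (HWN : (W <= N)%nat) by nia.
assert (Hk3 : (3 <= k)%nat) by lia.
set (win := fun j => andb (Nat.ltb N j) (Nat.leb j (N + W))).
assert (Hwin : forall j, win j = true -> (N < j <= N + W)%nat).
{ intros j E. unfold win in E. apply Bool.andb_true_iff in E. destruct E as [E1 E2].
  apply Nat.ltb_lt in E1. apply Nat.leb_le in E2. lia. }
assert (Hwin2 : forall j, (N < j <= N + W)%nat -> win j = true).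
{ intros j E. unfold win. apply Bool.andb_true_iff. split. apply Nat.ltb_lt; lia. apply Nat.leb_le; lia. }
set (f := fun j => if win j then RtoC (Nr * rho^j) else RtoC 0).
set (c := fun j => if win j then Nr * (rho^j * rho^j) else 0).
assert (Hrj : forall j, 0 <= rho^j) by (intros; apply pow_le; lra).
assert (F1 : forall j, (Cmod (f j))^2 * beta j = c j).
{ intros j. unfold f, c. destruct (win j) eqn:E.
  - apply Hwin in E. rewrite (W3 beta k hbeta Hk3 j) by (rewrite <- HNdef; lia). rewrite <- HNdef. fold Nr.
    rewrite Cmod_R, Rabs_pos_eq by (apply Rmult_le_pos; [lra|auto]). field. lra.
  - rewrite Cmod_0. ring. }
assert (F2 : forall j, scal (pow_n (RtoC rho) j) (f j) = RtoC (c j)).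
{ intros j. change (scal (pow_n (RtoC rho) j) (f j)) with (Cmult (pow_n (RtoC rho) j) (f j)).
  rewrite pow_n_RtoC. unfold f, c. destruct (win j).
  - rewrite <- RtoC_mult. f_equal. ring.
  - rewrite <- RtoC_mult. f_equal. ring. }
assert (Hcfin : forall j, (N + W < j)%nat -> c j = 0).
{ intros j Hj. unfold c. destruct (win j) eqn:E; auto. apply Hwin in E. lia. }
assert (Hc0 : forall j, 0 <= c j).
{ intros j. unfold c. destruct (win j). apply Rmult_le_pos. lra. apply Rmult_le_pos; auto. lra. }
set (V := sum_n c (N + W)).
assert (Sc : is_series c V) by (unfold V; exact (is_series_fin (K := R_AbsRing) (V := R_NormedModule) c (N+W) Hcfin)).
assert (Sf : is_series (fun j => (Cmod (f j))^2 * beta j) V).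
{ apply is_series_ext with c. intros; symmetry; apply F1. exact Sc. }
assert (Hfn : H2norm2 beta f = V) by (apply is_series_unique; exact Sf).
assert (Pf : is_pseries f (RtoC rho) (RtoC V)).
{ unfold is_pseries. apply is_series_ext with (fun j => RtoC (c j)). intros; symmetry; apply F2.
  unfold V. rewrite <- sum_n_RtoC. apply (is_series_fin (K := C_AbsRing) (V := C_NormedModule)).
  intros m Hm. rewrite Hcfin by exact Hm. reflexivity. }
destruct (HM f (ex_intro _ _ Sf)) as [g [Hg [Hle Hz]]].
destruct (Hz (RtoC r)) as [l [Hl1 Hl2]].
{ rewrite Cmod_R, Rabs_pos_eq; lra. }
rewrite TmobR in Hl1 by nra. fold rho in Hl1.
assert (El : l = RtoC V).
{ refine (filterlim_locally_unique (K := C_AbsRing) (V := C_NormedModule) (F := eventually) _ _ _ Hl1 Pf).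
  all: try (apply Proper_StrongProper, eventually_filter). }
rewrite El in Hl2.
assert (HV0 : 0 <= V) by (apply sumR_nonneg; exact Hc0).
set (z := x * (1 + / Nr)).
set (E := kf / (1 - x) + Nr * x ^ (N - 1) / (1 - z)).
assert (Hx1 : L / (2 * Nr) <= 1 - x).
{ unfold x. pose proof (one_minus_exp u Hu). replace (L / (2 * Nr)) with (u / 2) by (unfold u; field; lra). exact H. }
set (v := (L - 1) / Nr).
assert (Hv : 0 < v <= 1).
{ unfold v. split. apply Rdiv_lt_0_compat; lra. apply Rmult_le_reg_r with Nr; auto. unfold Rdiv. rewrite Rmult_assoc, Rinv_l by lra. nra. }
assert (Hzv : z <= exp (- v)).
{ unfold z, x. replace (- v) with (- u + / Nr) by (unfold u, v; field; lra). rewrite exp_plus.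
  apply Rmult_le_compat_l. apply Rlt_le, exp_pos. apply exp_ineq1_le. }
assert (Hz1 : L / (4 * Nr) <= 1 - z).
{ pose proof (one_minus_exp v Hv). assert (L / (4 * Nr) <= v / 2).
  { unfold v. apply Rmult_le_reg_r with (4 * Nr). lra. field_simplify; lra. }
  lra. }
assert (Hz0 : 0 < z) by (unfold z; assert (0 < / Nr) by (apply Rinv_0_lt_compat; lra); nra).
assert (HzL : z < 1) by (assert (0 < L / (4 * Nr)) by (apply Rdiv_lt_0_compat; lra); lra).
assert (HxN : x ^ N = / kr).
{ unfold x. rewrite exp_pow. replace (INR N * - u) with (- L) by (unfold u; fold Nr; field; lra).
  rewrite exp_Ropp. unfold L. rewrite exp_ln by lra. reflexivity. }
assert (Hx3 : / 3 <= x).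
{ unfold x. apply Rle_trans with (exp (- (1))). rewrite exp_Ropp. apply Rinv_le_contravar. apply exp_pos. apply exp_le_3.
  destruct (Req_dec u 1) as [e|e]; [rewrite e; lra|left; apply exp_increasing; lra]. }
assert (HxN1 : x ^ (N - 1) <= 3 / kr).
{ assert (x ^ (N - 1) * x = / kr). { rewrite <- HxN. replace (x ^ N) with (x ^ (S (N - 1))) by (f_equal; lia). simpl. ring. }
  assert (0 <= x ^ (N-1)) by (apply pow_le; lra).
  apply Rmult_le_reg_r with x. lra. rewrite H. unfold Rdiv.
  assert (0 < / kr) by (apply Rinv_0_lt_compat; lra).
  assert (0 <= / kr * (3 * x - 1)) by (apply Rmult_le_pos; lra). lra. }
assert (HEb : E <= 7 * Nr^2 / kr).
{ unfold E.
  assert (A1 : kf / (1 - x) <= kf * (2 * Nr / L)).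
  { unfold Rdiv. apply Rmult_le_compat_l. lra.
    replace (2 * Nr * / L) with (/ (L / (2 * Nr))) by (field; lra). apply Rinv_le_contravar; [apply Rdiv_lt_0_compat; lra|auto]. }
  assert (A2 : Nr * x ^ (N-1) / (1 - z) <= Nr * (3 / kr) * (4 * Nr / L)).
  { unfold Rdiv. rewrite Rmult_assoc. rewrite (Rmult_assoc Nr). apply Rmult_le_compat_l. lra.
    apply Rmult_le_compat. apply pow_le; lra. apply Rlt_le, Rinv_0_lt_compat; lra. exact HxN1.
    replace (4 * Nr * / L) with (/ (L / (4 * Nr))) by (field; lra). apply Rinv_le_contravar; [apply Rdiv_lt_0_compat; lra|auto]. }
  assert (A3 : kf * (2 * Nr / L) + Nr * (3 / kr) * (4 * Nr / L) = 14 * Nr^2 / (kr * L)).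
  { rewrite HNk. field. lra. }
  assert (A4 : 14 * Nr^2 / (kr * L) <= 7 * Nr^2 / kr).
  { unfold Rdiv. rewrite Rinv_mult. assert (0 < Nr^2 * / kr) by (apply Rmult_lt_0_compat; [nra|apply Rinv_0_lt_compat; lra]).
    assert (/ L <= / 2) by (apply Rinv_le_contravar; lra). nra. }
  lra. }
assert (HE : forall n, sum_n (fun j => r^(2*j) / beta j) n <= E).
{ intros n. rewrite (sumR_ext _ (fun j => x^j / beta j)).
  - pose proof (E_bound beta k x hbeta Hk3 Hx) as EB. rewrite <- HNdef in EB. fold Nr kf in EB.
    unfold E, z. apply EB. exact HzL.
  - intros j. rewrite pow_mult, Hr2. reflexivity. }
pose proof (CS_bound beta g r V E (/ M') Bpos Hg ltac:(lra) ltac:(apply Rinv_0_lt_compat; lra) HE Hl2) as CS.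
rewrite Rabs_pos_eq in CS by lra.
fold (H2norm2 beta g) in CS.
rewrite Hfn in Hle.
assert (HVE : V <= E * M').
{ assert (/ M' * H2norm2 beta g <= V).
  { assert (M * V <= M' * V) by (unfold M'; pose proof (Rle_abs M); nra).
    apply Rmult_le_reg_l with M'. lra. rewrite <- Rmult_assoc, Rinv_r, Rmult_1_l by lra. lra. }
  replace (E / / M') with (E * M') in CS by (field; lra). lra. }
assert (HkA : kr * a >= 2).
{ assert (INR k * a > 2) by (apply Rmult_lt_reg_r with (/a); [apply Rinv_0_lt_compat; lra|];
     rewrite Rmult_assoc, Rinv_r, Rmult_1_r by lra; exact Hk2a). unfold kr; nra. }
assert (H2Ns : 2 * Nr * s = L) by (unfold s; field; lra).
assert (Hsa : s <= a / 4).
{ assert (s * (2 * kr * INR k) <= INR k) by nra.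
  assert (s * (2 * kr) <= 1) by nra. nra. }
set (u' := (1 - a) * s).
assert (Hu' : 0 <= u' <= a / 4) by (unfold u'; split; nra).
set (vv := u' / (1 - u')).
assert (Hvv : exp (- vv) <= 1 - u').
{ rewrite exp_Ropp. pose proof (exp_ineq1_le vv). assert (1 + vv = / (1 - u')) by (unfold vv; field; lra).
  replace (1 - u') with (/ / (1 - u')) by (rewrite Rinv_inv; reflexivity).
  apply Rinv_le_contravar. apply Rinv_0_lt_compat; lra. lra. }
assert (Hvvr : exp (- vv) <= rho) by (unfold u' in Hvv; lra).
set (P := rho ^ (2 * (N + W))).
assert (HP1 : exp (INR (2 * (N + W)) * - vv) <= P).
{ rewrite <- exp_pow. apply pow_incr. split; [apply Rlt_le, exp_pos|exact Hvvr]. }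
set (Wr := INR W).
assert (HWr1 : Wr * INR q <= Nr) by (unfold Wr, Nr; rewrite <- mult_INR; apply le_INR; lia).
assert (HWr2 : Nr < INR q * (Wr + 1)) by (unfold Wr, Nr; rewrite <- S_INR, <- mult_INR; apply lt_INR; lia).
assert (Hqa : / INR q <= a / 2).
{ apply Rmult_le_reg_r with (INR q). lra. rewrite Rinv_l by lra.
  assert (INR q * a > 2) by (apply Rmult_lt_reg_r with (/a); [apply Rinv_0_lt_compat; lra|];
     rewrite Rmult_assoc, Rinv_r, Rmult_1_r by lra; exact Hq). lra. }
assert (HT : INR (2 * (N + W)) * vv <= (1 - a / 4) * L).
{ rewrite mult_INR, plus_INR. fold Nr Wr. simpl (INR 2).
  assert (Hvv0 : vv * (1 - u') = u') by (unfold vv; field; lra).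
  assert (HWq : Wr <= Nr * / INR q).
  { apply Rmult_le_reg_r with (INR q). lra. rewrite Rmult_assoc, Rinv_l by lra. lra. }
  assert (HT1 : (1 + 1) * (Nr + Wr) * vv * (1 - u') <= (1 + / INR q) * (1 - a) * L).
  { rewrite Rmult_assoc, Hvv0. unfold u'. rewrite <- H2Ns.
    assert (Nr + Wr <= Nr * (1 + / INR q)) by lra.
    assert (0 <= (1 - a) * s) by nra. nra. }
  assert (HT2 : (1 + / INR q) * (1 - a) * L <= (1 - a / 2) * L).
  { apply Rmult_le_compat_r. lra. nra. }
  assert (HT3 : (1 - a / 2) * L <= (1 - a / 4) * L * (1 - u')).
  { assert (0 <= a * u') by (apply Rmult_le_pos; lra).
    assert (0 <= (1 - a/4) * (1 - u') - (1 - a/2)) by lra.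
    assert (0 <= L * ((1 - a/4) * (1 - u') - (1 - a/2))) by (apply Rmult_le_pos; lra).
    lra. }
  assert (Hvv1 : 0 <= vv) by (unfold vv; apply Rdiv_le_0_compat; lra).
  apply Rmult_le_reg_r with (1 - u'). lra. lra. }
assert (HP2 : / kr * exp (a * L / 4) <= P).
{ eapply Rle_trans; [|exact HP1].
  replace (/ kr) with (exp (- L)) by (rewrite exp_Ropp; unfold L; rewrite exp_ln by lra; reflexivity).
  rewrite <- exp_plus. destruct (Req_dec (- L + a * L / 4) (INR (2 * (N + W)) * - vv)) as [e|e].
  rewrite e; lra. left. apply exp_increasing. lra. }
assert (HVlow : forall d, (d <= W)%nat -> INR d * Nr * P <= sum_n c (N + d)).
{ induction d; intros Hd.
  - simpl. rewrite Rmult_0_l, Rmult_0_l. apply sumR_nonneg. exact Hc0.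
  - rewrite Nat.add_succ_r, sumR_S, S_INR. specialize (IHd ltac:(lia)).
    unfold c at 2. rewrite Hwin2 by lia.
    assert (P <= rho ^ S (N + d) * rho ^ S (N + d)).
    { rewrite <- pow_add. apply pow_le_dec. lra. lia. }
    nra. }
assert (HV1 : Wr * Nr * P <= V) by (apply HVlow; lia).
assert (HWr3 : Nr / (2 * INR q) <= Wr).
{ apply Rmult_le_reg_r with (2 * INR q). lra. unfold Rdiv. rewrite Rmult_assoc, Rinv_l, Rmult_1_r by lra. nra. }
set (e := exp (a * L / 4)).
assert (He : e <= 14 * INR q * M').
{ assert (Hchain : Nr / (2 * INR q) * Nr * (/ kr * e) <= 7 * Nr ^ 2 / kr * M').
  { assert (0 < Nr / (2 * INR q)) by (apply Rdiv_lt_0_compat; lra).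
    assert (0 <= / kr * e) by (apply Rmult_le_pos; [apply Rlt_le, Rinv_0_lt_compat; lra|apply Rlt_le, exp_pos]).
    assert (Nr / (2 * INR q) * Nr * (/ kr * e) <= Wr * Nr * P).
    { apply Rmult_le_compat. nra. lra. nra. exact HP2. }
    assert (0 <= M') by lra.
    assert (E * M' <= 7 * Nr ^ 2 / kr * M') by (apply Rmult_le_compat_r; lra).
    lra. }
  assert (Hq2 : Nr / (2 * INR q) * Nr * (/ kr * e) = (Nr ^ 2 / kr) * (e / (2 * INR q))) by (field; lra).
  assert (Hq3 : 7 * Nr ^ 2 / kr * M' = (Nr ^ 2 / kr) * (7 * M')) by (field; lra).
  rewrite Hq2, Hq3 in Hchain.
  assert (0 < Nr ^ 2 / kr) by (apply Rdiv_lt_0_compat; nra).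
  assert (e / (2 * INR q) <= 7 * M') by (apply Rmult_le_reg_l with (Nr ^ 2 / kr); auto).
  apply Rmult_le_reg_r with (/ (2 * INR q)). apply Rinv_0_lt_compat; lra.
  replace (14 * INR q * M' * / (2 * INR q)) with (7 * M') by (field; lra). exact H0. }
assert (HeL : 4 * ln (14 * INR q * M') / a < L).
{ unfold L. rewrite <- (ln_exp (4 * ln (14 * INR q * M') / a)). apply ln_increasing. apply exp_pos. unfold kr; lra. }
assert (14 * INR q * M' < e).
{ unfold e. rewrite <- (exp_ln (14 * INR q * M')) at 1 by (apply Rmult_lt_0_compat; lra).
  apply exp_increasing. apply Rmult_lt_reg_r with (4 / a). apply Rdiv_lt_0_compat; lra.
  replace (a * L / 4 * (4 / a)) with L by (field; lra).
  replace (ln (14 * INR q * M') * (4 / a)) with (4 * ln (14 * INR q * M') / a) by (field; lra). exact HeL. }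
lra.
Qed.
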